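(* Let $G$ be a BDH graph with color classes $X$ and $Y$, and let $v,v'\in V(G)$. Define $G\star\{v,v'\}$ as follows: if $v$ and $v'$ lie in different color classes, $G\star\{v,v'\}=G$; if they lie in the same color class, $G\star\{v,v'\}$ is obtained from $G$ by adding a new vertex $\widehat{vv'}$ to that color class, adjacent exactly to the vertices of $N(v)\cap N(v')$. Then $G\star\{v,v'\}$ is a BDH graph.
   Context: A graph $G$ is distance hereditary if for every connected induced subgraph $H$ of $G$ and all $u,v\in V(H)$, $d_H(u,v)=d_G(u,v)$; a BDH graph is a bipartite distance hereditary graph. (Equivalently, a bipartite graph is BDH iff it has no induced chordless cycle of length $\ge 6$ and no induced domino, where a domino is $C_6$ plus a chord joining two antipodal vertices.) $N(v)$ denotes the neighborhood of $v$. *)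

(* Defs.v *)
From mathcomp Require Import all_boot.
Set Implicit Arguments. Unset Strict Implicit. Unset Printing Implicit Defensive.

Definition simple_graph (T : finType) (e : rel T) : Prop :=
  symmetric e /\ irreflexive e.

Definition walk_in (T : finType) (e : rel T) (S : {set T}) (u v : T) (n : nat) : Prop :=
  exists p : seq T, [/\ size p = n, path e u p, last u p = v & all (mem S) (u :: p)].

Definition is_dist (T : finType) (e : rel T) (S : {set T}) (u v : T) (d : nat) : Prop :=
  walk_in e S u v d /\ forall m, m < d -> ~ walk_in e S u v m.

Definition induced_connected (T : finType) (e : rel T) (S : {set T}) : Prop :=
  forall u v, u \in S -> v \in S -> exists n, walk_in e S u v n.

(* Distance hereditary: for every connected induced subgraph H = G[S] and all u,v in H,
   d_H(u,v) = d_G(u,v) (equality of distances stated as: both have the same value). *)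
Definition distance_hereditary (T : finType) (e : rel T) : Prop :=
  forall S : {set T}, induced_connected e S ->
  forall u v, u \in S -> v \in S ->
  forall d, is_dist e S u v d <-> is_dist e [set: T] u v d.

Definition bipartite_with (T : finType) (e : rel T) (X Y : {set T}) : Prop :=
  [/\ X :&: Y = set0, X :|: Y = [set: T] &
      forall x y, e x y -> (x \in X) && (y \in Y) || (x \in Y) && (y \in X)].

Definition BDH_with (T : finType) (e : rel T) (X Y : {set T}) : Prop :=
  [/\ simple_graph e, bipartite_with e X Y & distance_hereditary e].

(* G * {v,v'} when v, v' lie in the same color class: vertex set option T,
   None is the new vertex adjacent exactly to N(v) ∩ N(v'). *)
Definition star_adj (T : finType) (e : rel T) (v v' : T) : rel (option T) :=
  fun a b =>
    match a, b with
    | Some x, Some y => e x y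
    | None, Some y => e v y && e v' y
    | Some x, None => e v x && e v' x
    | None, None => false
    end.

Definition star_class (T : finType) (v : T) (X : {set T}) : {set option T} :=
  [set a | if a is Some x then x \in X else v \in X].

(* Main.v *)
Require Import Defs.
From mathcomp Require Import all_boot zify.
From Stdlib Require Import Classical.
Set Implicit Arguments. Unset Strict Implicit. Unset Printing Implicit Defensive.

Definition fwalk (A : finType) (r : rel A) (S : {set A}) (f : nat -> A) (n : nat) :=
  (forall i, i < n -> r (f i) (f i.+1)) /\ (forall i, i <= n -> f i \in S).

Lemma walk_inP (A : finType) (r : rel A) S u x n :
  walk_in r S u x n <-> exists f, [/\ f 0 = u, f n = x & fwalk r S f n].
Proof.
split.
- move=> [p [Hs Hp Hl Ha]].
  exists (fun i => nth u (u :: p) i); split => //.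
  + by rewrite -Hs -last_nth.
  + split.
    * move=> i Hi. move/(pathP u): Hp => Hp. have := Hp i. rewrite Hs => /(_ Hi).
      by [].
    * move=> i Hi. move/(all_nthP u): Ha => Ha. apply: Ha => /=. lia.
- move=> [f [H0 Hn [Hw Hm]]].
  exists (mkseq (fun i => f i.+1) n).
  have Hnth : forall i, i <= n -> nth u (u :: mkseq (fun i => f i.+1) n) i = f i.
    move=> [|i] Hi /=; first by rewrite H0.
    by rewrite nth_mkseq.
  split.
  + by rewrite size_mkseq.
  + apply/(pathP u) => i; rewrite size_mkseq => Hi.
    rewrite Hnth; last lia. rewrite nth_mkseq //. exact: Hw.
  + by rewrite (last_nth u) size_mkseq Hnth.
  + apply/(all_nthP u) => i; rewrite /= size_mkseq => Hi.
    rewrite Hnth; last lia. apply: Hm; lia.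
Qed.

Definition findu (A : finType) (r : rel A) (f : nat -> A) (L : nat) :=
  [/\ (forall i, i < L -> r (f i) (f i.+1)),
      (forall i k, i <= L -> k <= L -> f i = f k -> i = k) &
      (forall i k, i <= L -> k <= L -> r (f i) (f k) -> i.+1 = k \/ k.+1 = i)].

Lemma skip (A : finType) (r : rel A) S f d i s :
  fwalk r S f d -> i + s <= d -> (i + s < d -> r (f i) (f (i + s).+1)) ->
  (i + s = d -> f i = f d) ->
  [/\ (fun t => f (if t <= i then t else t + s)) 0 = f 0,
      (fun t => f (if t <= i then t else t + s)) (d - s) = f d &
      fwalk r S (fun t => f (if t <= i then t else t + s)) (d - s)].
Proof.
move=> [Hw Hm] Hd Hr He; split.
- by [].
- case: ifP => H.
  + have -> : d - s = i by lia. by apply: He; lia.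
  + f_equal; lia.
- split.
  + move=> t Ht. case: ifP => H1; case: ifP => H2.
    * apply: Hw; lia.
    * have Eti : t = i by lia. subst t.
      rewrite (_ : i.+1 + s = (i+s).+1); [apply: Hr; lia | lia].
    * exfalso; lia.
    * rewrite (_ : t.+1 + s = (t+s).+1); [apply: Hw; lia | lia].
  + move=> t Ht. apply: Hm. case: ifP => _; lia.
Qed.

Lemma dist_findu (A : finType) (r : rel A) S u x d :
  symmetric r -> irreflexive r -> is_dist r S u x d -> exists f, [/\ f 0 = u, f d = x, fwalk r S f d & findu r f d].
Proof.
move=> Hsym Hirr [/walk_inP [f [H0 Hd Hf]] Hmin].
exists f; split => //; split.
- by case: Hf.
- move=> i k Hi Hk Heq.
  wlog Hik : i k Hi Hk Heq / i <= k.
    move=> W. case: (leqP i k) => H; first exact: W.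
    symmetry; apply: W => //; lia.
  case: (ltnP i k) => Hlt; last lia.
  have [||| G0 Gd Gw] := @skip A r S f d i (k - i) Hf.
  - lia.
  - move=> H. have -> : i + (k - i) = k by lia. rewrite Heq. case: Hf => Hw _; apply: Hw; lia.
  - move=> H. have <- : k = d by lia. exact Heq.
  exfalso; apply: (Hmin (d - (k - i))); first lia.
  apply/walk_inP; eexists; split; [ | | exact Gw]. exact: (eq_trans G0 H0). exact: (eq_trans Gd Hd).
- move=> i k Hi Hk Hr.
  wlog Hik : i k Hi Hk Hr / i <= k.
    move=> W. case: (leqP i k) => H; first exact: W.
    have [->|->] := W k i Hk Hi (ltac:(rewrite Hsym; exact Hr)) ltac:(lia); auto.
  case: (ltngtP i.+1 k) => Hlt; [|have Eki : k = i by lia|by left]; last by subst k; rewrite Hirr in Hr.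
  - have [||| G0 Gd Gw] := @skip A r S f d i (k - i - 1) Hf.
    + lia.
    + move=> H. have -> : (i + (k - i - 1)).+1 = k by lia. exact Hr.
    + lia.
    exfalso; apply: (Hmin (d - (k - i - 1))); first lia.
    apply/walk_inP; eexists; split; [ | | exact Gw]. exact: (eq_trans G0 H0). exact: (eq_trans Gd Hd).
Qed.

Lemma ip (A : finType) (r : rel A) (f : nat -> A) L g m :
  findu r f L -> (forall k, k <= m -> exists i, i <= L /\ g k = f i) ->
  (forall k, k < m -> r (g k) (g k.+1)) -> g 0 = f 0 -> g m = f L -> L <= m.
Proof.
move=> [_ Hinj Hadj] Hin Hw H0 Hm.
have Cl : forall k, k <= m -> exists i, [/\ i <= k, i <= L & g k = f i].
  elim=> [|k IH] Hk.
  - exists 0; split => //.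
  - have [i [Hik HiL Hgi]] := IH (ltnW Hk).
    have [i' [Hi'L Hgi']] := Hin _ Hk.
    have := Hw k Hk. rewrite Hgi Hgi' => /Hadj.
    move=> /(_ HiL Hi'L) Hc. exists i'; split => //; lia.
have [i [Him HiL Hgi]] := Cl m (leqnn m).
have := Hinj _ _ HiL (leqnn L). rewrite -Hgi Hm => /(_ erefl). lia.
Qed.

Definition img (A : finType) (f : nat -> A) L : {set A} :=
  [set x | [exists i : 'I_L.+1, f i == x]].

Lemma in_img (A : finType) (f : nat -> A) L i : i <= L -> f i \in img f L.
Proof. move=> Hi. rewrite inE. apply/existsP. have Hi1 : i < L.+1 by lia. by exists (Ordinal Hi1). Qed.

Lemma img_inv (A : finType) (f : nat -> A) L x : x \in img f L -> exists i, i <= L /\ x = f i.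
Proof. rewrite inE => /existsP [i /eqP <-]. exists i; split => //. have := ltn_ord i; lia. Qed.

Lemma dhpath (A : finType) (r : rel A) (f : nat -> A) L g m :
  distance_hereditary r -> symmetric r -> findu r f L ->
  fwalk r setT g m -> g 0 = f 0 -> g m = f L -> L <= m.
Proof.
move=> Hdh Hsym Hf Hg H0 Hm.
have [Hw Hinj Hadj] := Hf.
have Hconn : induced_connected r (img f L).
  move=> x y /img_inv [i [Hi ->]] /img_inv [k [Hk ->]].
  case: (leqP i k) => Hik.
  - exists (k - i); apply/walk_inP; exists (fun t => f (i + t)); split.
    + by rewrite addn0.
    + f_equal; lia.
    + split.
      * move=> t Ht. rewrite addnS. apply: Hw; lia.
      * move=> t Ht. apply: in_img; lia.
  - exists (i - k); apply/walk_inP; exists (fun t => f (i - t)); split.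
    + by rewrite subn0.
    + f_equal; lia.
    + split.
      * move=> t Ht. rewrite Hsym. have -> : i - t = (i - t.+1).+1 by lia. apply: Hw; lia.
      * move=> t Ht. apply: in_img; lia.
have Hd : is_dist r (img f L) (f 0) (f L) L.
  split.
  - apply/walk_inP; exists f; split => //; split => //.
    move=> i Hi; exact: in_img.
  - move=> n Hn /walk_inP [h [Ph0 PhL [Phw Phm]]].
    have : L <= n; last lia.
    apply: (ip (g:=h) (m:=n) Hf) => //.
    move=> k Hk; have [i [Hi Hki]] := img_inv (Phm k Hk). by exists i.
have [_ Hmin] := (Hdh _ Hconn (f 0) (f L) (in_img f (leq0n L)) (in_img f (leqnn L)) L).1 Hd.
case: (leqP L m) => // Hlt; exfalso; apply: (Hmin m Hlt).
apply/walk_inP; exists g; split => //.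
Qed.

Definition notri (T : finType) (e : rel T) := forall a b c, e a b -> e b c -> e a c -> False.

Lemma star_sym (T : finType) (e : rel T) v v' : symmetric e -> symmetric (star_adj e v v').
Proof. move=> Hs [x|] [y|] //=; by rewrite Hs. Qed.

Lemma star_irr (T : finType) (e : rel T) v v' : irreflexive e -> irreflexive (star_adj e v v').
Proof. by move=> Hi [x|] //=. Qed.

Lemma star_hom (T : finType) (e : rel T) v v' u : symmetric e ->
  (forall y, e v y -> e v' y -> e u y) ->
  forall a b, star_adj e v v' a b -> e (odflt u a) (odflt u b).
Proof.
move=> Hs Hu [x|] [y|] //=.
- by move=> /andP [H1 H2]; rewrite Hs; apply: Hu.
- by move=> /andP [H1 H2]; apply: Hu.
Qed.

Lemma findu_rev (A : finType) (r : rel A) f L : symmetric r -> findu r f L -> findu r (fun t => f (L - t)) L.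
Proof.
move=> Hs [Hw Hi Ha]; split.
- move=> i HiL. rewrite Hs. have -> : L - i = (L - i.+1).+1 by lia. apply: Hw; lia.
- move=> i k H1 H2 /Hi. move=> H; have := H ltac:(lia) ltac:(lia); lia.
- move=> i k H1 H2 /Ha. move=> H; have := H ltac:(lia) ltac:(lia); lia.
Qed.

Lemma fwalk_rev (A : finType) (r : rel A) S g m : symmetric r -> fwalk r S g m -> fwalk r S (fun t => g (m - t)) m.
Proof.
move=> Hs [Hw Hm]; split.
- move=> i Hi. rewrite Hs. have -> : m - i = (m - i.+1).+1 by lia. apply: Hw; lia.
- move=> i Hi; apply: Hm; lia.
Qed.

Lemma findu_odflt (T : finType) (e : rel T) v v' u f L :
  symmetric e -> irreflexive e -> (forall y, e v y -> e v' y -> e u y) ->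
  findu (star_adj e v v') f L ->
  (forall i k x, i <= L -> k <= L -> f i = None -> f k = Some x ->
     x <> u /\ (e u x -> i.+1 = k \/ k.+1 = i)) ->
  findu e (fun i => odflt u (f i)) L.
Proof.
move=> Hs Hirr Hu [Hw Hi Ha] Hc; split.
- move=> i HiL; exact: (star_hom Hs Hu (Hw i HiL)).
- move=> i k H1 H2. case Ei: (f i) => [x|]; case Ek: (f k) => [y|] /=.
  + move=> Exy; apply: Hi => //; by rewrite Ei Ek Exy.
  + move=> Exu; have [H _] := Hc k i x H2 H1 Ek Ei; by case: H.
  + move=> Exu; have [H _] := Hc i k y H1 H2 Ei Ek; by case: H.
  + move=> _; apply: Hi => //; by rewrite Ei Ek.
- move=> i k H1 H2. case Ei: (f i) => [x|]; case Ek: (f k) => [y|] /=.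
  + move=> Exy; apply: Ha => //; by rewrite Ei Ek.
  + rewrite Hs => Exu; have [_ H] := Hc k i x H2 H1 Ek Ei. case: (H Exu); auto.
  + move=> Exu; have [_ H] := Hc i k y H1 H2 Ei Ek. exact: H.
  + by rewrite Hirr.
Qed.

Lemma findu_sub (T : finType) (e : rel T) v v' w0 f L a b :
  findu (star_adj e v v') f L -> a <= b -> b <= L ->
  (forall t, a <= t -> t <= b -> f t <> None) ->
  findu e (fun t => odflt w0 (f (a + t))) (b - a).
Proof.
move=> [Hw Hi Ha] Hab HbL Hn.
have Hs : forall t, t <= b - a -> exists x, f (a + t) = Some x.
  move=> t Ht. case E: (f (a + t)) => [x|]; first by exists x.
  exfalso; apply: (Hn (a+t)) => //; lia.
split.
- move=> t Ht. have [x Ex] := Hs t ltac:(lia). have [y Ey] := Hs t.+1 ltac:(lia).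
  have := Hw (a + t) ltac:(lia). by rewrite -addnS Ex Ey /=.
- move=> t k H1 H2. have [x Ex] := Hs t H1. have [y Ey] := Hs k H2.
  rewrite Ex Ey /= => Exy. have := Hi (a+t) (a+k) ltac:(lia) ltac:(lia). rewrite Ex Ey Exy => /(_ erefl); lia.
- move=> t k H1 H2. have [x Ex] := Hs t H1. have [y Ey] := Hs k H2.
  rewrite Ex Ey /= => Exy. have := Ha (a+t) (a+k) ltac:(lia) ltac:(lia). rewrite Ex Ey /= => /(_ Exy); lia.
Qed.

Lemma walk2 (T : finType) (e : rel T) x y z : e x y -> e y z ->
  fwalk e setT (fun t => match t with 0 => x | 1 => y | _ => z end) 2.
Proof.
move=> H1 H2; split.
- by move=> [|[|]].
- by move=> i _; rewrite inE.
Qed.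

Lemma not_none (T : finType) (e : rel T) v v' f L i j :
  findu (star_adj e v v') f L -> f j = None -> i <= L -> j <= L -> i <> j -> exists x, f i = Some x.
Proof.
move=> [_ Hi _] Hj HiL HjL Hij. case E: (f i) => [x|]; first by exists x.
exfalso; apply: Hij; apply: Hi => //; by rewrite E Hj.
Qed.

Lemma pairF (T : finType) (e : rel T) v v' f L a b p q :
  findu (star_adj e v v') f L -> a <= L -> b <= L -> f a = Some p -> f b = Some q ->
  (p = q -> a = b) /\ (e p q -> a.+1 = b \/ b.+1 = a).
Proof.
move=> [_ Hi Ha] H1 H2 E1 E2; split.
- move=> Epq; apply: Hi => //; by rewrite E1 E2 Epq.
- move=> Epq; apply: Ha => //; by rewrite E1 E2.
Qed.

Lemma notin (T : finType) (e : rel T) v v' f L j c1 c2 u k :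
  findu (star_adj e v v') f L -> f j = None -> 0 < j -> j < L -> k <= L ->
  f j.-1 = Some c1 -> f j.+1 = Some c2 -> e u c1 -> e u c2 -> f k = Some u -> False.
Proof.
move=> Hf Hjn Hj0 HjL HkL E1 E2 H1 H2 Ek.
have [_ A1] := pairF Hf HkL (ltac:(lia) : j.-1 <= L) Ek E1.
have [_ A2] := pairF Hf HkL (ltac:(lia) : j.+1 <= L) Ek E2.
have B1 := A1 H1; have B2 := A2 H2.
have Ekj : k = j by lia.
by rewrite Ekj Hjn in Ek.
Qed.

Definition idx5 i j t := match t with 0 => i | 1 => i.+1 | 2 => j.-1 | _ => j.+1 end.

Lemma idx5_inj i j t s : i.+3 = j -> t <= 4 -> s <= 4 -> t <> 3 -> s <> 3 ->
  idx5 i j t = idx5 i j s -> t = s.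
Proof.
move=> H; case: t => [|[|[|[|[|t]]]]]; case: s => [|[|[|[|[|s]]]]] //= _ _ _ _; lia.
Qed.

Lemma idx5_adj i j t s : i.+3 = j -> t <= 4 -> s <= 4 -> t <> 3 -> s <> 3 ->
  (idx5 i j t).+1 = idx5 i j s \/ (idx5 i j s).+1 = idx5 i j t -> t.+1 = s \/ s.+1 = t.
Proof.
move=> H; case: t => [|[|[|[|[|t]]]]]; case: s => [|[|[|[|[|s]]]]] //= _ _ _ _; lia.
Qed.

Lemma left_case (T : finType) (e : rel T) v v' f L j i x :
  symmetric e -> irreflexive e -> notri e -> distance_hereditary e ->
  findu (star_adj e v v') f L -> f j = None -> 0 < j -> j < L -> i < j -> i.+1 <> j ->
  f i = Some x -> e v x -> False.
Proof.
move=> Hs Hirr Hnt Hdh Hf Hjn Hj0 HjL Hij Hij1 Ei Hvx.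
have [Hw Hinj Ha] := Hf.
have [c1 E1] := not_none (i:=j.-1) Hf Hjn ltac:(lia) ltac:(lia) ltac:(lia).
have [c2 E2] := not_none (i:=j.+1) Hf Hjn ltac:(lia) ltac:(lia) ltac:(lia).
have /andP [Hvc1 Hv'c1] : e v c1 && e v' c1.
  have := Hw j.-1 ltac:(lia). by rewrite (_ : j.-1.+1 = j) ?E1 ?Hjn //; lia.
have /andP [Hvc2 Hv'c2] : e v c2 && e v' c2.
  have := Hw j ltac:(lia). by rewrite Hjn E2.
have Hsub := findu_sub v Hf (ltac:(lia) : i <= j.-1) (ltac:(lia) : j.-1 <= L)
  (fun t H1 H2 => ltac:(move=> Ht; have := Hinj t j ltac:(lia) ltac:(lia); rewrite Ht Hjn => /(_ erefl); lia)).
have Hle : j.-1 - i <= 2.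
  apply: (dhpath Hdh Hs Hsub (walk2 (y:=v) (_ : e x v) Hvc1)).
  - by rewrite Hs.
  - by rewrite /= addn0 Ei.
  - by rewrite /= (_ : i + (j.-1 - i) = j.-1) ?E1 //; lia.
have [y1 Ey1] := not_none (i:=i.+1) Hf Hjn ltac:(lia) ltac:(lia) ltac:(lia).
have Hxy1 : e x y1 by have := Hw i ltac:(lia); rewrite Ei Ey1.
case: (ltnP i.+2 j) => Hi2; last first.
  (* i = j - 2 *)
  have Ey : y1 = c1 by move: Ey1; rewrite (_ : i.+1 = j.-1) ?E1; [case | lia].
  subst y1. exact: (Hnt v x c1 Hvx Hxy1 Hvc1).
have Hi3 : i.+3 = j by lia.
have Hy1c1 : e y1 c1 by have := Hw i.+1 ltac:(lia); rewrite Ey1 (_ : i.+2 = j.-1) ?E1 //; lia.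
case: (boolP (e v' x)) => Hv'x.
  have := Ha j i ltac:(lia) ltac:(lia). rewrite Hjn Ei /= Hvx Hv'x => /(_ erefl). lia.
have NI := fun k HkL Ek => notin (u:=v') (k:=k) Hf Hjn Hj0 HjL HkL E1 E2 Hv'c1 Hv'c2 Ek.
pose q := fun t => match t with 0 => x | 1 => y1 | 2 => c1 | 3 => v' | _ => c2 end.
pose idx := idx5 i j.
have Fq : forall t, t <> 3 -> t <= 4 -> f (idx t) = Some (q t).
  by move=> [|[|[|[|[|t]]]]] //=.
have Hidx : forall t, t <= 4 -> idx t <= L.
  move=> t Ht. have : j.+1 <= L by lia. have : i < j by lia. clear -Ht. rewrite /idx /idx5.
  by case: t Ht => [|[|[|[|[|t]]]]] /=; lia.
have Hq : findu e q 4.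
  split.
  - move=> [|[|[|[|t]]]] //= _. by rewrite Hs.
  - move=> t s Ht Hs4 Eq.
    case: (t =P 3) => Ht3; case: (s =P 3) => Hs3.
    + by rewrite Ht3 Hs3.
    + exfalso; apply: (NI (idx s)); first exact: Hidx.
      by rewrite Fq // -Eq Ht3.
    + exfalso; apply: (NI (idx t)); first exact: Hidx.
      by rewrite Fq // Eq Hs3.
    + have [P _] := pairF Hf (Hidx t Ht) (Hidx s Hs4) (Fq t Ht3 Ht) (Fq s Hs3 Hs4).
      exact: (idx5_inj Hi3 Ht Hs4 Ht3 Hs3 (P Eq)).
  - have Hv'y1 : e v' y1 -> False.
      move=> H. apply: (Hnt y1 c1 v' Hy1c1); by rewrite Hs.
    have K3 : forall s, s <= 4 -> e v' (q s) -> 3 = s.+1 \/ s.+1 = 3 \/ s = 4.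
      move=> [|[|[|[|[|s]]]]] //= _ H;
        first [by left | by right; right | by rewrite H in Hv'x | by case: (Hv'y1 H) | by rewrite Hirr in H].
    move=> t s Ht Hs4 Eq.
    case: (t =P 3) => Ht3; case: (s =P 3) => Hs3.
    + by rewrite Ht3 Hs3 /= Hirr in Eq.
    + subst t. have := K3 s Hs4 Eq. lia.
    + subst s. rewrite Hs in Eq. have := K3 t Ht Eq. lia.
    + have [_ P] := pairF Hf (Hidx t Ht) (Hidx s Hs4) (Fq t Ht3 Ht) (Fq s Hs3 Hs4).
      exact: (idx5_adj Hi3 Ht Hs4 Ht3 Hs3 (P Eq)).
have : 4 <= 2.
  apply: (dhpath Hdh Hs Hq (walk2 (y:=v) (_ : e x v) Hvc2)) => //.
  by rewrite Hs.
by [].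
Qed.

Lemma start_u (T : finType) (e : rel T) v v' f L u c y :
  symmetric e -> irreflexive e -> notri e -> distance_hereditary e ->
  (forall z, e v z -> e v' z -> e u z) ->
  findu (star_adj e v v') f L -> f 0 = None -> 3 <= L ->
  f 1 = Some c -> f 3 = Some y -> e u c -> ~~ e u y ->
  findu e (fun i => odflt u (f i)) L.
Proof.
move=> Hs Hirr Hnt Hdh Hu Hf H0 HL E1 E3 Huc Huy.
have [Hw Hinj Ha] := Hf.
apply: (findu_odflt Hs Hirr Hu Hf) => i k x Hi Hk Ei Ek.
have Ei0 : i = 0 by have := Hinj i 0 Hi (leq0n L); rewrite Ei H0 => /(_ erefl).
subst i.
have Hk0 : k <> 0 by move=> Hk0; rewrite Hk0 H0 in Ek.
split.
- move=> Exu; subst x.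
  have [_ P] := pairF Hf Hk (ltac:(lia) : 1 <= L) Ek E1.
  have Hk2 : k = 2 by have := P Huc; lia.
  subst k. have := Hw 2 ltac:(lia). rewrite Ek E3 /=. by move=> H; rewrite H in Huy.
- move=> Hux. case: (leqP k 1) => Hk1; first by left; lia.
  have Hsub := findu_sub v Hf (ltac:(lia) : 1 <= k) Hk
    (fun t H1 H2 => ltac:(move=> Ht; have := Hinj t 0 ltac:(lia) ltac:(lia); rewrite Ht H0 => /(_ erefl); lia)).
  have Hle : k - 1 <= 2.
    apply: (dhpath Hdh Hs Hsub (walk2 (y:=u) (_ : e c u) Hux)).
    - by rewrite Hs.
    - by rewrite /= E1.
    - by rewrite /= (_ : 1 + (k - 1) = k) ?Ek //; lia.
  case: (ltnP k 3) => Hk3.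
  + have Ek2 : k = 2 by lia. subst k.
    have Hcx : e c x by have := Hw 1 ltac:(lia); rewrite E1 Ek.
    case: (Hnt u c x Huc Hcx Hux).
  + have Ek3 : k = 3 by lia. subst k. rewrite E3 in Ek. case: Ek => Exy; subst x.
    by rewrite Hux in Huy.
Qed.

Lemma start_case (T : finType) (e : rel T) v v' f L :
  symmetric e -> irreflexive e -> notri e -> distance_hereditary e ->
  findu (star_adj e v v') f L -> f 0 = None -> 3 <= L ->
  exists u, (forall z, e v z -> e v' z -> e u z) /\ findu e (fun i => odflt u (f i)) L.
Proof.
move=> Hs Hirr Hnt Hdh Hf H0 HL.
have [Hw Hinj Ha] := Hf.
have [c E1] := not_none (i:=1) Hf H0 ltac:(lia) ltac:(lia) ltac:(lia).
have [y E3] := not_none (i:=3) Hf H0 ltac:(lia) ltac:(lia) ltac:(lia).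
have /andP [Hvc Hv'c] : e v c && e v' c by have := Hw 0 ltac:(lia); rewrite H0 E1.
have Nb : ~~ (e v y && e v' y).
  apply/negP => Hb. have := Ha 0 3 ltac:(lia) ltac:(lia). rewrite H0 E3 /= Hb => /(_ erefl). lia.
case: (boolP (e v y)) => Hvy.
- exists v'; split; first by [].
  apply: (start_u Hs Hirr Hnt Hdh _ Hf H0 HL E1 E3 Hv'c) => //.
  by move: Nb; rewrite Hvy.
- exists v; split; first by [].
  exact: (start_u Hs Hirr Hnt Hdh _ Hf H0 HL E1 E3 Hvc).
Qed.

Lemma inner_case (T : finType) (e : rel T) v v' f L j :
  symmetric e -> irreflexive e -> notri e -> distance_hereditary e ->
  findu (star_adj e v v') f L -> f j = None -> 0 < j -> j < L ->
  findu e (fun i => odflt v (f i)) L.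
Proof.
move=> Hs Hirr Hnt Hdh Hf Hjn Hj0 HjL.
have [Hw Hinj Ha] := Hf.
have [c1 E1] := not_none (i:=j.-1) Hf Hjn ltac:(lia) ltac:(lia) ltac:(lia).
have [c2 E2] := not_none (i:=j.+1) Hf Hjn ltac:(lia) ltac:(lia) ltac:(lia).
have /andP [Hvc1 Hv'c1] : e v c1 && e v' c1.
  have := Hw j.-1 ltac:(lia). by rewrite (_ : j.-1.+1 = j) ?E1 ?Hjn //; lia.
have /andP [Hvc2 Hv'c2] : e v c2 && e v' c2.
  have := Hw j ltac:(lia). by rewrite Hjn E2.
apply: (findu_odflt Hs Hirr (fun z H _ => H) Hf) => i k x Hi Hk Ei Ek.
have Eij : i = j by have := Hinj i j Hi (ltnW HjL); rewrite Ei Hjn => /(_ erefl).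
subst i.
have Hk0 : k <> j by move=> Hkj; rewrite Hkj Hjn in Ek.
split.
- move=> Exv; subst x. exact: (notin Hf Hjn Hj0 HjL Hk E1 E2 Hvc1 Hvc2 Ek).
- move=> Hvx. case: (ltngtP k j) => Hkj; last by [].
  + case: (k.+1 =P j) => Hk1; first by right.
    case: (left_case Hs Hirr Hnt Hdh Hf Hjn Hj0 HjL Hkj Hk1 Ek Hvx).
  + case: (j.+1 =P k) => Hk1; first by left.
    have Hr := findu_rev (star_sym v v' Hs) Hf.
    have Hjn' : f (L - (L - j)) = None by rewrite (_ : L - (L - j) = j) //; lia.
    have Ek' : f (L - (L - k)) = Some x by rewrite (_ : L - (L - k) = k) //; lia.
    case: (left_case Hs Hirr Hnt Hdh Hr Hjn' ltac:(lia) ltac:(lia) (ltac:(lia) : L - k < L - j)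
      ltac:(lia) Ek' Hvx).
Qed.

Lemma close_u (T : finType) (e : rel T) v v' u h L g m :
  symmetric e -> distance_hereditary e -> (forall z, e v z -> e v' z -> e u z) ->
  findu e (fun i => odflt u (h i)) L -> fwalk (star_adj e v v') setT g m ->
  g 0 = h 0 -> g m = h L -> L <= m.
Proof.
move=> Hs Hdh Hu Hf [Hw _] H0 Hm.
apply: (dhpath (g := fun i => odflt u (g i)) Hdh Hs Hf).
- split; last by move=> *; rewrite inE.
  move=> i Hi; exact: (star_hom Hs Hu (Hw i Hi)).
- by rewrite /= H0.
- by rewrite /= Hm.
Qed.

Lemma main_star (T : finType) (e : rel T) v v' f L g m :
  symmetric e -> irreflexive e -> notri e -> distance_hereditary e ->
  findu (star_adj e v v') f L -> fwalk (star_adj e v v') setT g m ->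
  g 0 = f 0 -> g m = f L -> L <= m.
Proof.
move=> Hs Hirr Hnt Hdh Hf Hg H0 Hm.
have [Hw Hinj Ha] := Hf.
case: (leqP L 2) => HL.
  case: (leqP L m) => // Hlt; exfalso.
  case: m Hg Hm Hlt => [|[|m]] Hg Hm Hlt.
  - have := Hinj 0 L (leq0n L) (leqnn L). rewrite -H0 -Hm => /(_ erefl). lia.
  - have := Hg.1 0 ltac:(lia). rewrite H0 Hm => /(Ha 0 L (leq0n L) (leqnn L)). lia.
  - lia.
case: (boolP [exists i : 'I_L.+1, f i == None]).
- move=> /existsP [[j HjL] /eqP /= Hjn].
  case: (posnP j) => Hj0.
  + subst j. have [u [Hu Hfu]] := start_case Hs Hirr Hnt Hdh Hf Hjn HL.
    exact: (close_u Hs Hdh Hu Hfu Hg H0 Hm).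
  + case: (ltnP j L) => HjL'.
    * exact: (close_u Hs Hdh (fun z H _ => H) (inner_case Hs Hirr Hnt Hdh Hf Hjn Hj0 HjL') Hg H0 Hm).
    * have HjLe : j = L by lia. subst j.
      have Hr := findu_rev (star_sym v v' Hs) Hf.
      have Hjn' : f (L - 0) = None by rewrite subn0.
      have [u [Hu Hfu]] := start_case Hs Hirr Hnt Hdh Hr Hjn' HL.
      apply: (close_u Hs Hdh Hu Hfu (fwalk_rev (star_sym v v' Hs) Hg)).
      -- by rewrite /= !subn0 Hm.
      -- by rewrite /= !subnn H0.
- move=> Hno.
  have Hc : forall i, i <= L -> f i <> None.
    move=> i Hi Ei. move/existsP: Hno; apply. have Hi1 : i < L.+1 by lia.
    exists (Ordinal Hi1); by rewrite /= Ei.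
  apply: (close_u (u := v) Hs Hdh (fun z H _ => H) _ Hg H0 Hm).
  apply: (findu_odflt Hs Hirr (fun z H _ => H) Hf) => i k x Hi Hk Ei.
  by case: (Hc i Hi Ei).
Qed.

Lemma dist_unique (A : finType) (r : rel A) S a b d1 d2 :
  is_dist r S a b d1 -> is_dist r S a b d2 -> d1 = d2.
Proof.
move=> [W1 M1] [W2 M2]. case: (ltngtP d1 d2) => // H.
- by case: (M2 _ H W1).
- by case: (M1 _ H W2).
Qed.

Lemma exists_dist (A : finType) (r : rel A) S a b n :
  walk_in r S a b n -> exists d, is_dist r S a b d.
Proof.
elim/ltn_ind: n => n IH Hw.
case: (classic (exists m, m < n /\ walk_in r S a b m)).
- move=> [m [Hm Wm]]. exact: (IH m Hm Wm).
- move=> Hn. exists n; split => // m Hm Wm. apply: Hn. by exists m.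
Qed.

Lemma walk_setT (A : finType) (r : rel A) S a b n :
  walk_in r S a b n -> walk_in r setT a b n.
Proof.
move=> /walk_inP [f [H0 Hn [Hw _]]]. apply/walk_inP; exists f; split => //; split => //; by move=> *; rewrite inE.
Qed.

Lemma dist_S_T (T : finType) (e : rel T) v v' S a b d :
  symmetric e -> irreflexive e -> notri e -> distance_hereditary e ->
  is_dist (star_adj e v v') S a b d -> is_dist (star_adj e v v') setT a b d.
Proof.
move=> Hs Hirr Hnt Hdh Hd.
have [f [H0 Hn Hw Hf]] := dist_findu (star_sym v v' Hs) (star_irr v v' Hirr) Hd.
split.
- apply: (walk_setT (S:=S)). apply/walk_inP; exists f; split => //.
- move=> m Hm /walk_inP [g [G0 Gm Gw]].
  have := main_star Hs Hirr Hnt Hdh Hf Gw ltac:(by rewrite G0 H0) ltac:(by rewrite Gm Hn). lia.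
Qed.

Lemma dh_star (T : finType) (e : rel T) v v' :
  symmetric e -> irreflexive e -> notri e -> distance_hereditary e ->
  distance_hereditary (star_adj e v v').
Proof.
move=> Hs Hirr Hnt Hdh S Hconn a b Ha Hb d; split.
- exact: dist_S_T.
- move=> HdT.
  have [n Wn] := Hconn a b Ha Hb.
  have [d' Hd'] := exists_dist Wn.
  have -> : d = d' by apply: dist_unique HdT (dist_S_T Hs Hirr Hnt Hdh Hd').
  exact: Hd'.
Qed.

Theorem theorem3 (T : finType) (e : rel T) (X Y : {set T}) (v v' : T) :
  BDH_with e X Y ->
  if (v \in X) == (v' \in X) then
    (* same color class: G * {v,v'} adds the new vertex None *)
    BDH_with (star_adj e v v') (star_class v X) (star_class v Y)
  else
    (* different color classes: G * {v,v'} = G *)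
    BDH_with e X Y.
Proof.
move=> HB; case: ifP => _; last exact: HB.
case: HB => [[Hs Hirr] [HXY HXuY Hbip] Hdh].
have HYX : forall x, (x \in Y) = ~~ (x \in X).
  move=> x. have /setP /(_ x) := HXY. have /setP /(_ x) := HXuY.
  rewrite !inE. by case: (x \in X); case: (x \in Y).
have Hb : forall x y, e x y -> (x \in X) != (y \in X).
  move=> x y /Hbip. rewrite !HYX. by case: (x \in X); case: (y \in X).
have Hnt : notri e.
  move=> a b c /Hb H1 /Hb H2 /Hb H3. move: H1 H2 H3.
  by case: (a \in X); case: (b \in X); case: (c \in X).
split.
- split; [exact: star_sym | exact: star_irr].
- split.
  + apply/setP => [[x|]]; rewrite !inE; rewrite HYX; by case: (_ \in X).
  + apply/setP => [[x|]]; rewrite !inE; rewrite HYX; by case: (_ \in X).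
  + move=> [x|] [y|] /=; rewrite !inE !HYX.
    * move=> /Hb. by case: (x \in X); case: (y \in X).
    * move=> /andP [/Hb H _]. move: H. by case: (x \in X); case: (v \in X).
    * move=> /andP [/Hb H _]. move: H. by case: (y \in X); case: (v \in X).
    * by [].
- exact: dh_star.
Qed.
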